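(* Consider the hidden Markov model and the procedure $\texttt{VRSO-PE}$ described in the context. Let $\boldsymbol{\phi}^{(0)}\in\boldsymbol{\Phi}$ and let input quantities $\{\widehat{\boldsymbol{\alpha}}^{(0)}_t,\widehat{\boldsymbol{\beta}}^{(0)}_t,\widehat{\boldsymbol{\gamma}}^{(0)}_t,\widehat{\boldsymbol{\xi}}^{(0)}_t\}_{t=1}^T$ be given. Suppose that (1) $\widehat{\boldsymbol{\alpha}}^{(0)}_t=\boldsymbol{\alpha}_t(\boldsymbol{\phi}^{(0)})$ and $\widehat{\boldsymbol{\beta}}^{(0)}_t=\boldsymbol{\beta}_t(\boldsymbol{\phi}^{(0)})$ for all $t=1,\ldots,T$; (2) $\widehat{\boldsymbol{\gamma}}^{(0)}_t=\boldsymbol{\gamma}_t(\boldsymbol{\phi}^{(0)})$ and $\widehat{\boldsymbol{\xi}}^{(0)}_t=\boldsymbol{\xi}_t(\boldsymbol{\phi}^{(0)})$ for all $t=1,\ldots,T$; (3) $\nabla F\big(\boldsymbol{\phi}^{(0)}\mid \boldsymbol{\gamma}(\boldsymbol{\phi}^{(0)}),\boldsymbol{\xi}(\boldsymbol{\phi}^{(0)})\big)=0$. Then, with probability 1, $$\texttt{VRSO-PE}\Big(\{\widehat{\boldsymbol{\alpha}}^{(0)}_t,\widehat{\boldsymbol{\beta}}^{(0)}_t,\widehat{\boldsymbol{\gamma}}^{(0)}_t,\widehat{\boldsymbol{\xi}}^{(0)}_t\}_{t=1}^T,\ \boldsymbol{\phi}^{(0)},\ \lambda,\ A,\ P,\ M\Big)=\boldsymbol{\phi}^{(0)}$$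 for all step sizes $\lambda\in\mathbb{R}$, all $A\in\{\mathrm{SAGA},\mathrm{SVRG}\}$, all $P\in\{\texttt{True},\texttt{False}\}$ and all $M\in\mathbb{N}$.
   Context: Setting (hidden Markov model). Observations $\mathbf{y}=(y_1,\ldots,y_T)$; $N$ hidden states; parameter $\boldsymbol{\phi}=(\boldsymbol{\theta},\boldsymbol{\eta})\in\boldsymbol{\Phi}$. The initial distribution is a row vector $\boldsymbol{\delta}(\boldsymbol{\eta})$, the transition matrix is $\boldsymbol{\Gamma}(\boldsymbol{\eta})$ (entries $\Gamma_{ij}$), and $P(y;\boldsymbol{\theta})=\mathrm{diag}\big(f^{(1)}(y;\boldsymbol{\theta}),\ldots,f^{(N)}(y;\boldsymbol{\theta})\big)$ collects the state-dependent emission densities; all these are positive and differentiable in $\boldsymbol{\phi}$. Forward/backward quantities (row vectors): $\boldsymbol{\alpha}_1(\boldsymbol{\phi})=\boldsymbol{\delta}(\boldsymbol{\eta})P(y_1;\boldsymbol{\theta})$, $\boldsymbol{\alpha}_t(\boldsymbol{\phi})=\boldsymbol{\alpha}_{t-1}(\boldsymbol{\phi})\boldsymbol{\Gamma}(\boldsymbol{\eta})P(y_t;\boldsymbol{\theta})$ for $t\ge 2$; $\boldsymbol{\beta}_T(\boldsymbol{\phi})=\mathbf{1}$, $\boldsymbol{\beta}_t(\boldsymbol{\phi})^\top=\boldsymbol{\Gamma}(\boldsymbol{\eta})P(y_{t+1};\boldsymbol{\theta})\boldsymbol{\beta}_{t+1}(\boldsymbol{\phi})^\top$ for $t<T$.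 Write $\widetilde{\boldsymbol{\alpha}}_t(\mathbf{a},\boldsymbol{\phi})$ for the map $\boldsymbol{\delta}(\boldsymbol{\eta})P(y_1;\boldsymbol{\theta})$ if $t=1$ and $\mathbf{a}\boldsymbol{\Gamma}(\boldsymbol{\eta})P(y_t;\boldsymbol{\theta})$ if $t\ge2$ (so $\widetilde{\boldsymbol{\alpha}}_t(\boldsymbol{\alpha}_{t-1}(\boldsymbol{\phi}),\boldsymbol{\phi})=\boldsymbol{\alpha}_t(\boldsymbol{\phi})$), and analogously $\widetilde{\boldsymbol{\beta}}_t(\mathbf{b},\boldsymbol{\phi})$ equal to $\mathbf{1}$ if $t=T$ and $(\boldsymbol{\Gamma}(\boldsymbol{\eta})P(y_{t+1};\boldsymbol{\theta})\mathbf{b}^\top)^\top$ if $t<T$. Conditional probabilities: $\widetilde{\boldsymbol{\gamma}}_t(\mathbf{a},\mathbf{b})=(\mathbf{a}\circ\mathbf{b})/(\mathbf{a}\mathbf{b}^\top)$ and, for $t\ge2$, $\widetilde{\boldsymbol{\xi}}_t(\mathbf{a}',\mathbf{b},\boldsymbol{\phi})=\mathrm{diag}(\mathbf{a}')\boldsymbol{\Gamma}(\boldsymbol{\eta})P(y_t;\boldsymbol{\theta})\mathrm{diag}(\mathbf{b})\big/\big(\mathbf{a}'\boldsymbol{\Gamma}(\boldsymbol{\eta})P(y_t;\boldsymbol{\theta})\mathbf{b}^\top\big)$; set $\boldsymbol{\gamma}_t(\boldsymbol{\phi})=\widetilde{\boldsymbol{\gamma}}_t(\boldsymbol{\alpha}_t(\boldsymbol{\phi}),\boldsymbol{\beta}_t(\boldsymbol{\phi}))$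 and $\boldsymbol{\xi}_t(\boldsymbol{\phi})=\widetilde{\boldsymbol{\xi}}_t(\boldsymbol{\alpha}_{t-1}(\boldsymbol{\phi}),\boldsymbol{\beta}_t(\boldsymbol{\phi}),\boldsymbol{\phi})$ (these are the smoothed state and transition probabilities); $\boldsymbol{\gamma}(\boldsymbol{\phi}),\boldsymbol{\xi}(\boldsymbol{\phi})$ denote the collections over $t$. Objective: $F_t(\boldsymbol{\phi}\mid\boldsymbol{\gamma}_t,\boldsymbol{\xi}_t)=-\Big[\mathbb{1}\{t=1\}\sum_i\gamma_1(i)\log\delta_i(\boldsymbol{\eta})+\mathbb{1}\{t\ge2\}\sum_{i,j}\xi_t(i,j)\log\Gamma_{ij}(\boldsymbol{\eta})+\sum_i\gamma_t(i)\log f^{(i)}(y_t;\boldsymbol{\theta})\Big]$ and $F(\boldsymbol{\phi}\mid\boldsymbol{\gamma},\boldsymbol{\xi})=\frac1T\sum_{t=1}^TF_t(\boldsymbol{\phi}\mid\boldsymbol{\gamma}_t,\boldsymbol{\xi}_t)$, i.e. $-1/T$ times the EM expected complete-data log-likelihood; gradients are with respect to $\boldsymbol{\phi}$. Procedure $\texttt{VRSO-PE}(\{\widehat{\boldsymbol{\alpha}}^{(0)}_t,\widehat{\boldsymbol{\beta}}^{(0)}_t,\widehat{\boldsymbol{\gamma}}^{(0)}_t,\widehat{\boldsymbol{\xi}}^{(0)}_t\}_{t=1}^T,\boldsymbol{\phi}^{(0)},\lambda,A,P,M)$: initialize gradient tables $\widehat\nabla F^{(0)}_t=\nabla F_t(\boldsymbol{\phi}^{(0)}\mid\widehat{\boldsymbol{\gamma}}^{(0)}_t,\widehat{\boldsymbol{\xi}}^{(0)}_t)$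 and $\widehat\nabla F^{(0)}=\frac1T\sum_t\widehat\nabla F^{(0)}_t$. For $m=0,\ldots,M-1$: draw $t_m$ uniformly from $\{1,\ldots,T\}$. If $P=\texttt{True}$, set $\widehat{\boldsymbol{\alpha}}^{(m+1)}_{t_m}=\widetilde{\boldsymbol{\alpha}}_{t_m}(\widehat{\boldsymbol{\alpha}}^{(m)}_{t_m-1},\boldsymbol{\phi}^{(m)})$, $\widehat{\boldsymbol{\beta}}^{(m+1)}_{t_m}=\widetilde{\boldsymbol{\beta}}_{t_m}(\widehat{\boldsymbol{\beta}}^{(m)}_{t_m+1},\boldsymbol{\phi}^{(m)})$, $\widehat{\boldsymbol{\gamma}}^{(m+1)}_{t_m}=\widetilde{\boldsymbol{\gamma}}_{t_m}(\widehat{\boldsymbol{\alpha}}^{(m+1)}_{t_m},\widehat{\boldsymbol{\beta}}^{(m+1)}_{t_m})$, $\widehat{\boldsymbol{\xi}}^{(m+1)}_{t_m}=\widetilde{\boldsymbol{\xi}}_{t_m}(\widehat{\boldsymbol{\alpha}}^{(m+1)}_{t_m-1},\widehat{\boldsymbol{\beta}}^{(m+1)}_{t_m},\boldsymbol{\phi}^{(m)})$; all other entries (and all entries if $P=\texttt{False}$) are copied unchanged from step $m$. Then $\boldsymbol{\phi}^{(m+1)}=\boldsymbol{\phi}^{(m)}-\lambda\big[\nabla F_{t_m}(\boldsymbol{\phi}^{(m)}\mid\widehat{\boldsymbol{\gamma}}^{(m+1)}_{t_m},\widehat{\boldsymbol{\xi}}^{(m+1)}_{t_m})-\widehat\nabla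 F^{(m)}_{t_m}+\widehat\nabla F^{(m)}\big]$. If $A=\mathrm{SAGA}$: $\widehat\nabla F^{(m+1)}_{t_m}=\nabla F_{t_m}(\boldsymbol{\phi}^{(m)}\mid\widehat{\boldsymbol{\gamma}}^{(m+1)}_{t_m},\widehat{\boldsymbol{\xi}}^{(m+1)}_{t_m})$, $\widehat\nabla F^{(m+1)}=\widehat\nabla F^{(m)}+\frac1T(\widehat\nabla F^{(m+1)}_{t_m}-\widehat\nabla F^{(m)}_{t_m})$, other table entries unchanged; if $A=\mathrm{SVRG}$ the gradient tables are left unchanged. The output is $\boldsymbol{\phi}^{(M)}$. *)

(* Defs.v *)
From HB Require Import structures.
From mathcomp Require Import all_boot all_order all_algebra.
From mathcomp Require Import all_classical all_reals all_analysis.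
Set Implicit Arguments. Unset Strict Implicit. Unset Printing Implicit Defensive.
Import Order.TTheory GRing.Theory Num.Theory.
Import numFieldNormedType.Exports.
Local Open Scope ring_scope.

(* Conventions:
   - time indices t are natural numbers, meaningful for 1 <= t <= T;
   - hidden states are 'I_N; row vectors 'rV[R]_N, matrices 'M[R]_N;
   - parameter phi (= (theta, eta)) is a row vector 'rV[R]_d;
   - init phi   : the initial distribution delta(eta)   (row vector)
     Gam phi    : the transition matrix Gamma(eta)
     emis y phi : the row vector (f^(1)(y;theta), ..., f^(N)(y;theta))
     obs t      : the observation y_t. *)

Section HMM.
Variables (R : realType) (Y : Type) (N d : nat).
Variables (init : 'rV[R]_d -> 'rV[R]_N) (Gam : 'rV[R]_d -> 'M[R]_N)
          (emis : Y -> 'rV[R]_d -> 'rV[R]_N) (obs : nat -> Y) (T : nat).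

Definition Pm (t : nat) (phi : 'rV[R]_d) : 'M[R]_N := diag_mx (emis (obs t) phi).

Definition alpha_tilde (t : nat) (a : 'rV[R]_N) (phi : 'rV[R]_d) : 'rV[R]_N :=
  if t == 1%N then init phi *m Pm 1 phi else a *m Gam phi *m Pm t phi.

Definition beta_tilde (t : nat) (b : 'rV[R]_N) (phi : 'rV[R]_d) : 'rV[R]_N :=
  if t == T then const_mx 1 else (Gam phi *m Pm t.+1 phi *m b^T)^T.

(* alpha_t(phi), t >= 1 (alpha_0 is an unused dummy) *)
Fixpoint alpha (t : nat) (phi : 'rV[R]_d) : 'rV[R]_N :=
  match t with
  | 0 => 0
  | t'.+1 => alpha_tilde t'.+1 (alpha t' phi) phi
  end.

Fixpoint beta_aux (n t : nat) (phi : 'rV[R]_d) : 'rV[R]_N :=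
  match n with
  | 0 => const_mx 1
  | n'.+1 => beta_tilde t (beta_aux n' t.+1 phi) phi
  end.

Definition beta (t : nat) (phi : 'rV[R]_d) : 'rV[R]_N := beta_aux (T - t) t phi.

Definition gamma_tilde (a b : 'rV[R]_N) : 'rV[R]_N :=
  ((a *m b^T) 0 0)^-1 *: \row_i (a 0 i * b 0 i).

Definition xi_tilde (t : nat) (a' b : 'rV[R]_N) (phi : 'rV[R]_d) : 'M[R]_N :=
  ((a' *m Gam phi *m Pm t phi *m b^T) 0 0)^-1 *:
    (diag_mx a' *m Gam phi *m Pm t phi *m diag_mx b).

Definition gamma (t : nat) (phi : 'rV[R]_d) : 'rV[R]_N :=
  gamma_tilde (alpha t phi) (beta t phi).

Definition xi (t : nat) (phi : 'rV[R]_d) : 'M[R]_N :=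
  xi_tilde t (alpha t.-1 phi) (beta t phi) phi.

Definition Ft (t : nat) (g : 'rV[R]_N) (x : 'M[R]_N) (phi : 'rV[R]_d) : R :=
  - ((if t == 1%N then \sum_i g 0 i * ln (init phi 0 i) else 0)
     + (if (2 <= t)%N then \sum_i \sum_j x i j * ln (Gam phi i j) else 0)
     + \sum_i g 0 i * ln (emis (obs t) phi 0 i)).

Definition Ffull (gs : nat -> 'rV[R]_N) (xs : nat -> 'M[R]_N) (phi : 'rV[R]_d) : R :=
  (T%:R)^-1 * \sum_(1 <= t < T.+1) Ft t (gs t) (xs t) phi.

End HMM.

Definition grad {R : realType} {d : nat} (f : 'rV[R]_d -> R) (phi : 'rV[R]_d)
  : 'rV[R]_d := \row_k ('D_(delta_mx 0 k) f phi).

Inductive vr_alg := SAGA | SVRG.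

Definition upd {X : Type} (f : nat -> X) (t : nat) (v : X) : nat -> X :=
  fun s => if s == t then v else f s.

Section VRSO.
Variables (R : realType) (Y : Type) (N d : nat).
Variables (init : 'rV[R]_d -> 'rV[R]_N) (Gam : 'rV[R]_d -> 'M[R]_N)
          (emis : Y -> 'rV[R]_d -> 'rV[R]_N) (obs : nat -> Y) (T : nat).

Definition gradFt (t : nat) (g : 'rV[R]_N) (x : 'M[R]_N) (phi : 'rV[R]_d) : 'rV[R]_d :=
  grad (Ft init Gam emis obs t g x) phi.

Record vr_state := VRState {
  st_a : nat -> 'rV[R]_N;
  st_b : nat -> 'rV[R]_N;
  st_g : nat -> 'rV[R]_N;
  st_x : nat -> 'M[R]_N;
  st_phi : 'rV[R]_d;
  st_G : nat -> 'rV[R]_d;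
  st_Gbar : 'rV[R]_d
}.

Definition vr_step (lam : R) (A : vr_alg) (P : bool) (s : vr_state) (t : nat)
  : vr_state :=
  let phi := st_phi s in
  let a' := if P then upd (st_a s) t (alpha_tilde init Gam emis obs t (st_a s t.-1) phi)
            else st_a s in
  let b' := if P then upd (st_b s) t (beta_tilde Gam emis obs T t (st_b s t.+1) phi)
            else st_b s in
  let g' := if P then upd (st_g s) t (gamma_tilde (a' t) (b' t)) else st_g s in
  let x' := if P then upd (st_x s) t (xi_tilde Gam emis obs t (a' t.-1) (b' t) phi)
            else st_x s in
  let gr := gradFt t (g' t) (x' t) phi in
  let phi' := phi - lam *: (gr - st_G s t + st_Gbar s) in
  let G' := if A is SAGA then upd (st_G s) t gr else st_G s in
  let Gbar' := if A is SAGA then st_Gbar s + (T%:R)^-1 *: (G' t - st_G s t)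
               else st_Gbar s in
  VRState a' b' g' x' phi' G' Gbar'.

Definition vrso_pe (ah bh gh : nat -> 'rV[R]_N) (xh : nat -> 'M[R]_N)
  (phi0 : 'rV[R]_d) (lam : R) (A : vr_alg) (P : bool) (ts : seq nat) : 'rV[R]_d :=
  let G0 := fun t => gradFt t (gh t) (xh t) phi0 in
  let Gbar0 := (T%:R)^-1 *: \sum_(1 <= t < T.+1) G0 t in
  st_phi (foldl (vr_step lam A P) (VRState ah bh gh xh phi0 G0 Gbar0) ts).

End VRSO.

(* Probability of an event under M i.i.d. uniform draws from {1,...,T}:
   a draw sequence is s : M.-tuple 'I_T, where i : 'I_T stands for i+1. *)
Definition unif_draws (M T : nat) (s : M.-tuple 'I_T) : seq nat :=
  [seq (val i).+1 | i <- s].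

Definition prob_draws {R : realType} (M T : nat) (E : seq nat -> bool) : R :=
  (#|[set s : M.-tuple 'I_T | E (unif_draws s)]|%:R) / ((T ^ M)%N%:R).

(* Main.v *)
Require Import Defs.
From HB Require Import structures.
From mathcomp Require Import all_boot all_order all_algebra.
From mathcomp Require Import all_classical all_reals all_analysis.
From mathcomp Require Import zify.
Import Order.TTheory GRing.Theory Num.Theory.
Import numFieldNormedType.Exports.
Local Open Scope ring_scope.

Section Diff.
Variables (R : realType) (d : nat).
Implicit Types (f : 'rV[R]_d -> R) (phi : 'rV[R]_d).

Lemma diff_ln_comp f phi : differentiable f phi -> 0 < f phi ->
  differentiable (fun q => ln (f q)) phi.
Proof.
move=> df fp; apply: (differentiable_comp (g:=@ln R) df).
apply/derivable1_diffP; have := is_derive1_ln fp; by case.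
Qed.

Lemma diff_sumf (I : Type) (r : seq I) (P : pred I) (h : I -> 'rV[R]_d -> R) phi :
  (forall i, differentiable (h i) phi) ->
  differentiable (fun q => \sum_(i <- r | P i) h i q) phi.
Proof.
move=> dh; elim: r => [|a r IH].
  have -> : (fun q => \sum_(i <- [::] | P i) h i q) = cst 0.
    by apply/funext => q; rewrite big_nil.
  exact: differentiable_cst.
case Pa: (P a).
  have -> : (fun q => \sum_(i <- a :: r | P i) h i q) =
     h a + (fun q => \sum_(i <- r | P i) h i q).
    by apply/funext => q; rewrite big_cons Pa.
  exact: differentiableD.
have -> : (fun q => \sum_(i <- a :: r | P i) h i q) =
     (fun q => \sum_(i <- r | P i) h i q).
  by apply/funext => q; rewrite big_cons Pa.
exact: IH.
Qed.

Lemma derivable_sumf (I : Type) (r : seq I) (P : pred I) (h : I -> 'rV[R]_d -> R) phi v :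
  (forall i, derivable (h i) phi v) ->
  derivable (fun q => \sum_(i <- r | P i) h i q) phi v.
Proof.
move=> dh; elim: r => [|a r IH].
  have -> : (fun q => \sum_(i <- [::] | P i) h i q) = cst 0.
    by apply/funext => q; rewrite big_nil.
  exact: derivable_cst.
case Pa: (P a).
  have -> : (fun q => \sum_(i <- a :: r | P i) h i q) =
     h a + (fun q => \sum_(i <- r | P i) h i q).
    by apply/funext => q; rewrite big_cons Pa.
  exact: derivableD.
have -> : (fun q => \sum_(i <- a :: r | P i) h i q) =
     (fun q => \sum_(i <- r | P i) h i q).
  by apply/funext => q; rewrite big_cons Pa.
exact: IH.
Qed.

Lemma derive_sumf (I : Type) (r : seq I) (P : pred I) (h : I -> 'rV[R]_d -> R) phi v :
  (forall i, derivable (h i) phi v) ->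
  'D_v (fun q => \sum_(i <- r | P i) h i q) phi = \sum_(i <- r | P i) 'D_v (h i) phi.
Proof.
move=> dh; elim: r => [|a r IH].
  have -> : (fun q => \sum_(i <- [::] | P i) h i q) = cst 0.
    by apply/funext => q; rewrite big_nil.
  by rewrite derive_cst big_nil.
have dr := @derivable_sumf _ r P _ _ _ dh.
case Pa: (P a).
  have -> : (fun q => \sum_(i <- a :: r | P i) h i q) =
     h a + (fun q => \sum_(i <- r | P i) h i q).
    by apply/funext => q; rewrite big_cons Pa.
  by rewrite deriveD // IH big_cons Pa.
have -> : (fun q => \sum_(i <- a :: r | P i) h i q) =
     (fun q => \sum_(i <- r | P i) h i q).
  by apply/funext => q; rewrite big_cons Pa.
by rewrite IH big_cons Pa.
Qed.

Lemma dN f phi : differentiable f phi -> differentiable (fun q => - f q) phi.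
Proof. exact: differentiableN. Qed.
Lemma dD f g phi : differentiable f phi -> differentiable g phi ->
  differentiable (fun q => f q + g q) phi.
Proof. exact: differentiableD. Qed.
Lemma dIf (b : bool) f phi : differentiable f phi ->
  differentiable (fun q => if b then f q else 0) phi.
Proof. by case: b => // _; exact: differentiable_cst. Qed.
Lemma dMl (c : R) f phi : differentiable f phi -> differentiable (fun q => c * f q) phi.
Proof. move=> df; apply: differentiableM => //; exact: differentiable_cst. Qed.

End Diff.

Section Main.
Variables (R : realType) (Y : Type) (N d T : nat)
  (init : 'rV[R]_d -> 'rV[R]_N) (Gam : 'rV[R]_d -> 'M[R]_N)
  (emis : Y -> 'rV[R]_d -> 'rV[R]_N) (obs : nat -> Y).
Hypotheses
  (init_pos : forall phi i, 0 < init phi 0 i)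
  (Gam_pos : forall phi i j, 0 < Gam phi i j)
  (emis_pos : forall y phi i, 0 < emis y phi 0 i)
  (init_diff : forall phi i, differentiable (fun q => init q 0 i) phi)
  (Gam_diff : forall phi i j, differentiable (fun q => Gam q i j) phi)
  (emis_diff : forall y phi i, differentiable (fun q => emis y q 0 i) phi).

Lemma diff_Ft t g x phi : differentiable (Ft init Gam emis obs t g x) phi.
Proof.
rewrite /Ft; apply: dN; apply: dD; [apply: dD|]; [apply: dIf| apply: dIf|];
  try (apply: diff_sumf => i); try (apply: diff_sumf => j);
  apply: dMl; apply: diff_ln_comp => //.
Qed.

Lemma grad_Ffull gs xs phi :
  grad (Ffull init Gam emis obs T gs xs) phi =
  (T%:R)^-1 *: \sum_(1 <= t < T.+1) gradFt init Gam emis obs t (gs t) (xs t) phi.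
Proof.
apply/rowP => k; rewrite /grad mxE [RHS]mxE summxE.
have -> : Ffull init Gam emis obs T gs xs =
   (T%:R)^-1 \*: (fun q => \sum_(1 <= t < T.+1) Ft init Gam emis obs t (gs t) (xs t) q).
  by apply/funext => q.
rewrite deriveZ; last first.
  apply: derivable_sumf => t; apply: diff_derivable; exact: diff_Ft.
rewrite derive_sumf; last by move=> t; apply: diff_derivable; exact: diff_Ft.
congr (_ * _); apply: eq_bigr => t _; by rewrite /gradFt /grad mxE.
Qed.

Variable phi0 : 'rV[R]_d.
Local Notation al t := (alpha init Gam emis obs t phi0).
Local Notation be t := (beta Gam emis obs T t phi0).
Local Notation ga t := (gamma init Gam emis obs T t phi0).
Local Notation xx t := (xi init Gam emis obs T t phi0).
Local Notation gF t g x := (gradFt init Gam emis obs t g x phi0).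

Definition Inv (s : vr_state R N d) := [/\ st_phi s = phi0, st_Gbar s = 0 &
  forall t, (1 <= t <= T)%N -> [/\ st_a s t = al t, st_b s t = be t, st_g s t = ga t,
     ((2 <= t)%N -> st_x s t = xx t) & st_G s t = gF t (ga t) (xx t)]].

Lemma alpha_step (a : nat -> 'rV[R]_N) t : (1 <= t <= T)%N ->
  (forall t', (1 <= t' <= T)%N -> a t' = al t') ->
  alpha_tilde init Gam emis obs t (a t.-1) phi0 = al t.
Proof.
case: t => [//|[|t]] Ht Ha; first by [].
rewrite /= Ha //; by move: Ht => /andP[_ /ltnW].
Qed.

Lemma beta_step (b : nat -> 'rV[R]_N) t : (1 <= t <= T)%N ->
  (forall t', (1 <= t' <= T)%N -> b t' = be t') ->
  beta_tilde Gam emis obs T t (b t.+1) phi0 = be t.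
Proof.
move=> /andP[t1 tT] Hb; rewrite /beta.
case: (ltngtP t T) tT => // [tlT|->] _; last by rewrite subnn /= /beta_tilde eqxx.
have -> : (T - t = (T - t.+1).+1)%N by rewrite subnSK.
by rewrite /= Hb ?tlT // /beta.
Qed.

Lemma pred_range n : (2 <= n)%N -> (1 <= n <= T)%N -> (1 <= n.-1 <= T)%N.
Proof. case: n => [|n] /=; lia. Qed.

Lemma step_inv lam A P s t : Inv s -> (1 <= t <= T)%N ->
  Inv (vr_step init Gam emis obs T lam A P s t).
Proof.
move=> [Hp HG Hs] Ht.
have Ha : forall t', (1 <= t' <= T)%N -> st_a s t' = al t' by move=> t' /Hs [].
have Hb : forall t', (1 <= t' <= T)%N -> st_b s t' = be t' by move=> t' /Hs [].
rewrite /vr_step Hp.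
set a' := (if P then upd (st_a s) t _ else st_a s).
set b' := (if P then upd (st_b s) t _ else st_b s).
set g' := (if P then upd (st_g s) t _ else st_g s).
set x' := (if P then upd (st_x s) t _ else st_x s).
have ha : forall t', (1 <= t' <= T)%N -> a' t' = al t'.
  move=> t' Ht'; rewrite /a'; case: ifP => _; last exact: Ha.
  rewrite /upd; case: eqP => [->|_]; [exact: alpha_step | exact: Ha].
have hb : forall t', (1 <= t' <= T)%N -> b' t' = be t'.
  move=> t' Ht'; rewrite /b'; case: ifP => _; last exact: Hb.
  rewrite /upd; case: eqP => [->|_]; [exact: beta_step | exact: Hb].
have hg : forall t', (1 <= t' <= T)%N -> g' t' = ga t'.
  move=> t' Ht'; rewrite /g'; case: ifP => _; last by case/Hs: Ht'.
  rewrite /upd; case: eqP => [->|_]; last by case/Hs: Ht'.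
  by rewrite ha // hb.
have hx : forall t', (1 <= t' <= T)%N -> (2 <= t')%N -> x' t' = xx t'.
  move=> t' Ht' t2; rewrite /x'; case: ifP => _; last by case/Hs: Ht' => _ _ _ ->.
  rewrite /upd; case: eqP => [e|_]; last by case/Hs: Ht' => _ _ _ ->.
  subst t'; have ht1 : (1 <= t.-1 <= T)%N by apply: pred_range.
  by rewrite ha // hb.
have hgr : gradFt init Gam emis obs t (g' t) (x' t) phi0 = gF t (ga t) (xx t).
  have t12 : (t == 1%N) || (2 <= t)%N by move: Ht; clear; lia.
  rewrite hg //; case/orP: t12 => [/eqP e1|t2]; last by rewrite hx.
  by rewrite e1.
rewrite hgr; have [_ _ _ _ HGt] := Hs t Ht.
split => /=.
- by rewrite HGt HG subrr addr0 scaler0 subr0.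
- by case: A => //=; rewrite /upd eqxx HGt HG subrr scaler0 addr0.
move=> t' Ht'; split; [exact: ha | exact: hb | exact: hg | exact: hx |].
case: A => /=; last by case/Hs: Ht'.
rewrite /upd; case: eqP => [->//|_]; by case/Hs: Ht'.
Qed.


Lemma fold_inv lam A P ts : forall s, Inv s -> all (fun t => (1 <= t <= T)%N) ts ->
  Inv (foldl (vr_step init Gam emis obs T lam A P) s ts).
Proof.
elim: ts => [//|t ts IH] s Hs /= /andP[Ht Hts].
apply: IH => //; exact: step_inv.
Qed.

Lemma main_lemma (HT : (0 < T)%N) (ah bh gh : nat -> 'rV[R]_N) (xh : nat -> 'M[R]_N)
  (H1 : forall t, (1 <= t <= T)%N ->
          ah t = alpha init Gam emis obs t phi0 /\ bh t = beta Gam emis obs T t phi0)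
  (H2 : forall t, (1 <= t <= T)%N ->
          gh t = gamma init Gam emis obs T t phi0 /\ xh t = xi init Gam emis obs T t phi0)
  (H3 : grad (Ffull init Gam emis obs T (fun t => gamma init Gam emis obs T t phi0)
                                        (fun t => xi init Gam emis obs T t phi0)) phi0 = 0) :
  forall (lam : R) (A : vr_alg) (P : bool) (M : nat),
    prob_draws (R := R) M T
      (fun ts => vrso_pe init Gam emis obs T ah bh gh xh phi0 lam A P ts == phi0) = 1.
Proof.
move=> lam A P M.
have Hinit : Inv (VRState ah bh gh xh phi0 (fun t => gradFt init Gam emis obs t (gh t) (xh t) phi0)
   ((T%:R)^-1 *: \sum_(1 <= t < T.+1) gradFt init Gam emis obs t (gh t) (xh t) phi0)).
  split => //=.
  - apply: (etrans _ H3); rewrite grad_Ffull; congr (_ *: _).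
    apply: eq_big_nat => t Ht; have [-> ->] := H2 t Ht; done.
  - move=> t Ht; have [-> ->] := H1 t Ht; have [-> ->] := H2 t Ht; by split.
have E : [set s : M.-tuple 'I_T | vrso_pe init Gam emis obs T ah bh gh xh phi0 lam A P
            (unif_draws s) == phi0] = [set: M.-tuple 'I_T].
  apply/setP => s; rewrite !inE; apply/eqP.
  have Hall : all (fun t => (1 <= t <= T)%N) (unif_draws s).
    rewrite /unif_draws all_map; apply/allP => i _ /=; exact: ltn_ord.
  by have [? _ _] := @fold_inv lam A P (unif_draws s) _ Hinit Hall.
rewrite /prob_draws E cardsT card_tuple card_ord divff // pnatr_eq0 -lt0n.
by rewrite expn_gt0 HT.
Qed.

End Main.

Theorem lemma6 (R : realType) (Y : Type) (N d T : nat)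
  (init : 'rV[R]_d -> 'rV[R]_N) (Gam : 'rV[R]_d -> 'M[R]_N)
  (emis : Y -> 'rV[R]_d -> 'rV[R]_N) (obs : nat -> Y)
  (* standing assumptions on the HMM *)
  (HT : (0 < T)%N)
  (init_pos : forall phi i, 0 < init phi 0 i)
  (init_sum : forall phi, \sum_i init phi 0 i = 1)
  (Gam_pos : forall phi i j, 0 < Gam phi i j)
  (Gam_sum : forall phi i, \sum_j Gam phi i j = 1)
  (emis_pos : forall y phi i, 0 < emis y phi 0 i)
  (init_diff : forall phi i, differentiable (fun q => init q 0 i) phi)
  (Gam_diff : forall phi i j, differentiable (fun q => Gam q i j) phi)
  (emis_diff : forall y phi i, differentiable (fun q => emis y q 0 i) phi)
  (* the input of VRSO-PE *)
  (phi0 : 'rV[R]_d) (ah bh gh : nat -> 'rV[R]_N) (xh : nat -> 'M[R]_N)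
  (H1 : forall t, (1 <= t <= T)%N ->
          ah t = alpha init Gam emis obs t phi0 /\ bh t = beta Gam emis obs T t phi0)
  (H2 : forall t, (1 <= t <= T)%N ->
          gh t = gamma init Gam emis obs T t phi0 /\ xh t = xi init Gam emis obs T t phi0)
  (H3 : grad (Ffull init Gam emis obs T (fun t => gamma init Gam emis obs T t phi0)
                                        (fun t => xi init Gam emis obs T t phi0)) phi0 = 0) :
  forall (lam : R) (A : vr_alg) (P : bool) (M : nat),
    prob_draws (R := R) M T
      (fun ts => vrso_pe init Gam emis obs T ah bh gh xh phi0 lam A P ts == phi0) = 1.
Proof.
move=> lam A P M.
exact: (@main_lemma R Y N d T init Gam emis obs init_pos Gam_pos emis_pos
  init_diff Gam_diff emis_diff phi0 HT ah bh gh xh H1 H2 H3 lam A P M).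
Qed.
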